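(* Let $C(\cdot,t)$, $t\in(-\infty,+\infty)$, be a solution by closed convex smooth embedded curves of the flow $$\frac{\partial C(p,t)}{\partial t}=\Big(\lambda+\int_0^{\xi(p)}\varphi\,d\xi\Big)C+\frac{\varphi}{2}C_\xi$$ ($\lambda$ a real constant) whose centro-affine curvature $\varphi$ is uniformly bounded on $S^1\times(-\infty,+\infty)$. Then $E(t)=\oint_{C(\cdot,t)}\varphi^2\,d\xi$ satisfies $\lim_{t\to-\infty}E(t)=0$.
   Context: For $u,v\in\mathbb{R}^2$, $[u,v]$ denotes the determinant of the matrix with columns $u,v$. Each curve $C(\cdot,t):S^1\to\mathbb{R}^2$ is smooth, closed, with $[C,C_p]\neq0$, $[C_p,C_{pp}]\neq0$ (then $[C_p,C_{pp}]/[C,C_p]>0$). The centro-affine metric is $g=\sqrt{[C_p,C_{pp}]/[C,C_p]}$, centro-affine arc-length $\xi(p)=\int_{p_0}^p g\,dp$ (so $d\xi=g\,dp$), and centro-affine curvature $\varphi=[C_{\xi\xi},C]/[C_\xi,C]$. *)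

(* Defs.v *)
From Stdlib Require Import Reals.
From Coquelicot Require Import Coquelicot.
Open Scope R_scope.

(* A planar family of curves C(p,t) = (X p t, Y p t), p the curve parameter
   (S^1 = R/Z, i.e. period 1), t the time. *)

Definition dp (f : R -> R -> R) : R -> R -> R :=
  fun p t => Derive (fun q => f q t) p.
Definition dt (f : R -> R -> R) : R -> R -> R :=
  fun p t => Derive (fun s => f p s) t.

Fixpoint Ck (n : nat) (f : R -> R -> R) : Prop :=
  (forall p t, continuous (fun z : R * R => f (fst z) (snd z)) (p, t)) /\
  match n with
  | O => True
  | S m => (forall p t, ex_derive (fun q => f q t) p /\ ex_derive (fun s => f p s) t)
           /\ Ck m (dp f) /\ Ck m (dt f)
  end.

Definition smooth2 (f : R -> R -> R) : Prop := forall n, Ck n f.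

Definition det2 (u1 u2 v1 v2 : R) : R := u1 * v2 - u2 * v1.

Section Curve.
Variables X Y : R -> R -> R.

Definition Xp := dp X.  Definition Yp := dp Y.
Definition Xpp := dp Xp. Definition Ypp := dp Yp.

(* centro-affine metric g = sqrt([C_p,C_pp]/[C,C_p]) *)
Definition cag (p t : R) : R :=
  sqrt (det2 (Xp p t) (Yp p t) (Xpp p t) (Ypp p t)
        / det2 (X p t) (Y p t) (Xp p t) (Yp p t)).

(* d/dxi = (1/g) d/dp *)
Definition Xxi (p t : R) : R := Xp p t / cag p t.
Definition Yxi (p t : R) : R := Yp p t / cag p t.
Definition Xxixi (p t : R) : R := dp Xxi p t / cag p t.
Definition Yxixi (p t : R) : R := dp Yxi p t / cag p t.

(* centro-affine curvature phi = [C_xixi, C]/[C_xi, C] *)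
Definition caphi (p t : R) : R :=
  det2 (Xxixi p t) (Yxixi p t) (X p t) (Y p t)
  / det2 (Xxi p t) (Yxi p t) (X p t) (Y p t).

(* E(t) = \oint phi^2 dxi = \int_0^1 phi^2 g dp *)
Definition caE (t : R) : R :=
  RInt (fun p => caphi p t ^ 2 * cag p t) 0 1.

(* \int_0^{xi(p)} phi dxi, with xi(p0) = 0, i.e. \int_{p0}^p phi g dp *)
Definition cumphi (p0 p t : R) : R :=
  RInt (fun q => caphi q t * cag q t) p0 p.

End Curve.

Definition closed_embedded (X Y : R -> R -> R) : Prop :=
  (forall p t, X (p + 1) t = X p t /\ Y (p + 1) t = Y p t) /\
  (forall p q t, 0 <= p < 1 -> 0 <= q < 1 ->
     X p t = X q t -> Y p t = Y q t -> p = q).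

(* convexity: for each p, the whole curve C(.,t) lies in one closed half-plane
   bounded by the tangent line at C(p,t) *)
Definition convex_curves (X Y : R -> R -> R) : Prop :=
  forall p t,
    (forall q, 0 <= det2 (Xp X p t) (Yp Y p t) (X q t - X p t) (Y q t - Y p t)) \/
    (forall q, det2 (Xp X p t) (Yp Y p t) (X q t - X p t) (Y q t - Y p t) <= 0).

Definition nondegenerate (X Y : R -> R -> R) : Prop :=
  forall p t,
    det2 (X p t) (Y p t) (Xp X p t) (Yp Y p t) <> 0 /\
    det2 (Xp X p t) (Yp Y p t) (Xpp X p t) (Ypp Y p t) <> 0.

(* the flow C_t = (lambda + \int_0^{xi(p)} phi dxi) C + (phi/2) C_xi,
   on one period p in [p0, p0+1) *)
Definition ca_flow (lam p0 : R) (X Y : R -> R -> R) : Prop :=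
  forall p t, p0 <= p < p0 + 1 ->
    dt X p t = (lam + cumphi X Y p0 p t) * X p t + caphi X Y p t / 2 * Xxi X Y p t /\
    dt Y p t = (lam + cumphi X Y p0 p t) * Y p t + caphi X Y p t / 2 * Yxi X Y p t.

(* Main.v *)
Require Import Defs.
From Stdlib Require Import Reals Lra FunctionalExtensionality Classical.
From Coquelicot Require Import Coquelicot.
Open Scope R_scope.

Definition C2d (f : R -> R -> R) := forall p t, continuity_2d_pt f p t.

Lemma cont_iff (f : R -> R -> R) p t :
  continuous (fun z : R * R => f (fst z) (snd z)) (p, t) <-> continuity_2d_pt f p t.
Proof. rewrite continuity_2d_pt_filterlim. reflexivity. Qed.

Lemma Ck_C2d n f : Ck n f -> C2d f.
Proof. destruct n; intros [H _] p t; apply cont_iff, H. Qed.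

Lemma Ck_mono n f : Ck (S n) f -> Ck n f.
Proof.
  revert f; induction n; intros f H.
  - split; [apply H | exact I].
  - destruct H as [Hc [Hd [Hp Ht]]]. split; [exact Hc|]. split; [exact Hd|].
    split; apply IHn; assumption.
Qed.

Lemma Ck_intro0 n f : C2d f ->
  (match n with O => True | S m => (forall p t, ex_derive (fun q => f q t) p /\ ex_derive (fun s => f p s) t)
           /\ Ck m (dp f) /\ Ck m (dt f) end) -> Ck n f.
Proof. intros Hc H. destruct n; (split; [intros p t; apply cont_iff, Hc | exact H]). Qed.

Lemma Ck_ex n f : Ck (S n) f -> forall p t, ex_derive (fun q => f q t) p /\ ex_derive (fun s => f p s) t.
Proof. intros [_ [H _]]. exact H. Qed.

Lemma Ck_const n c : Ck n (fun _ _ => c).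
Proof.
  induction n; apply Ck_intro0; try (intros p t; apply continuity_2d_pt_const); auto.
  split; [intros; split; apply ex_derive_const|].
  assert (E1 : dp (fun _ _ => c) = fun _ _ => 0).
  { apply functional_extensionality; intro p; apply functional_extensionality; intro t.
    unfold dp. apply Derive_const. }
  assert (E2 : dt (fun _ _ => c) = fun _ _ => 0).
  { apply functional_extensionality; intro p; apply functional_extensionality; intro t.
    unfold dt. apply Derive_const. }
  rewrite E1, E2. clear -IHn.
  assert (H0 : forall m, Ck m (fun _ _ : R => 0)).
  { induction m; apply Ck_intro0; try (intros p t; apply continuity_2d_pt_const); auto.
    split; [intros; split; apply ex_derive_const|].
    assert (E : dp (fun _ _ => 0) = fun _ _ => 0).
    { apply functional_extensionality; intro p; apply functional_extensionality; intro t.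
      unfold dp. apply Derive_const. }
    assert (E' : dt (fun _ _ => 0) = fun _ _ => 0).
    { apply functional_extensionality; intro p; apply functional_extensionality; intro t.
      unfold dt. apply Derive_const. }
    rewrite E, E'. auto. }
  auto.
Qed.

Lemma exR_plus (f g : R -> R) x : ex_derive f x -> ex_derive g x -> ex_derive (fun y => f y + g y) x.
Proof. intros; apply (ex_derive_plus f g); assumption. Qed.
Lemma exR_opp (f : R -> R) x : ex_derive f x -> ex_derive (fun y => - f y) x.
Proof. intros; apply (ex_derive_opp f); assumption. Qed.

Lemma dp_plus f g p t : ex_derive (fun q => f q t) p -> ex_derive (fun q => g q t) p ->
  dp (fun p t => f p t + g p t) p t = dp f p t + dp g p t.
Proof. unfold dp. intros. apply (Derive_plus (fun q => f q t) (fun q => g q t)); auto. Qed.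
Lemma dt_plus f g p t : ex_derive (fun s => f p s) t -> ex_derive (fun s => g p s) t ->
  dt (fun p t => f p t + g p t) p t = dt f p t + dt g p t.
Proof. unfold dt. intros. apply (Derive_plus (fun s => f p s) (fun s => g p s)); auto. Qed.
Lemma dp_mult f g p t : ex_derive (fun q => f q t) p -> ex_derive (fun q => g q t) p ->
  dp (fun p t => f p t * g p t) p t = dp f p t * g p t + f p t * dp g p t.
Proof. unfold dp. intros. apply (Derive_mult (fun q => f q t) (fun q => g q t)); auto. Qed.
Lemma dt_mult f g p t : ex_derive (fun s => f p s) t -> ex_derive (fun s => g p s) t ->
  dt (fun p t => f p t * g p t) p t = dt f p t * g p t + f p t * dt g p t.
Proof. unfold dt. intros. apply (Derive_mult (fun s => f p s) (fun s => g p s)); auto. Qed.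
Lemma dp_opp f p t : dp (fun p t => - f p t) p t = - dp f p t.
Proof. unfold dp. apply (Derive_opp (fun q => f q t)). Qed.
Lemma dt_opp f p t : dt (fun p t => - f p t) p t = - dt f p t.
Proof. unfold dt. apply (Derive_opp (fun s => f p s)). Qed.
Lemma dp_inv f p t : ex_derive (fun q => f q t) p -> f p t <> 0 ->
  dp (fun p t => / f p t) p t = - (dp f p t * (/ f p t * / f p t)).
Proof. unfold dp. intros. rewrite (Derive_inv (fun q => f q t)); auto. field; auto. Qed.
Lemma dt_inv f p t : ex_derive (fun s => f p s) t -> f p t <> 0 ->
  dt (fun p t => / f p t) p t = - (dt f p t * (/ f p t * / f p t)).
Proof. unfold dt. intros. rewrite (Derive_inv (fun s => f p s)); auto. field; auto. Qed.

Ltac fext := apply functional_extensionality; intro; apply functional_extensionality; intro; cbv beta; symmetry.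

Lemma Ck_plus n : forall f g, Ck n f -> Ck n g -> Ck n (fun p t => f p t + g p t).
Proof.
  induction n; intros f g Hf Hg; apply Ck_intro0;
    try (intros p t; apply continuity_2d_pt_plus; [apply (Ck_C2d _ _ Hf)|apply (Ck_C2d _ _ Hg)]); try exact I.
  destruct Hf as [_ [Df [Pf Tf]]], Hg as [_ [Dg [Pg Tg]]].
  split; [intros p t; destruct (Df p t), (Dg p t); split; apply exR_plus; assumption|].
  split.
  - replace (dp (fun p t => f p t + g p t)) with (fun p t => dp f p t + dp g p t).
    + apply IHn; assumption.
    + fext. exact (dp_plus f g x x0 (proj1 (Df x x0)) (proj1 (Dg x x0))).
  - replace (dt (fun p t => f p t + g p t)) with (fun p t => dt f p t + dt g p t).
    + apply IHn; assumption.
    + fext. exact (dt_plus f g x x0 (proj2 (Df x x0)) (proj2 (Dg x x0))).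
Qed.

Lemma Ck_opp n : forall f, Ck n f -> Ck n (fun p t => - f p t).
Proof.
  induction n; intros f Hf; apply Ck_intro0;
    try (intros p t; apply continuity_2d_pt_opp; apply (Ck_C2d _ _ Hf)); try exact I.
  destruct Hf as [_ [Df [Pf Tf]]].
  split; [intros p t; destruct (Df p t); split; apply exR_opp; assumption|].
  split.
  - replace (dp (fun p t => - f p t)) with (fun p t => - dp f p t).
    + apply IHn; assumption.
    + fext. exact (dp_opp f x x0).
  - replace (dt (fun p t => - f p t)) with (fun p t => - dt f p t).
    + apply IHn; assumption.
    + fext. exact (dt_opp f x x0).
Qed.

Lemma Ck_mult n : forall f g, Ck n f -> Ck n g -> Ck n (fun p t => f p t * g p t).
Proof.
  induction n; intros f g Hf Hg; apply Ck_intro0;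
    try (intros p t; apply continuity_2d_pt_mult; [apply (Ck_C2d _ _ Hf)|apply (Ck_C2d _ _ Hg)]); try exact I.
  pose proof (Ck_mono _ _ Hf) as Hf'. pose proof (Ck_mono _ _ Hg) as Hg'.
  destruct Hf as [_ [Df [Pf Tf]]], Hg as [_ [Dg [Pg Tg]]].
  split; [intros p t; destruct (Df p t), (Dg p t); split; apply ex_derive_mult; assumption|].
  split.
  - replace (dp (fun p t => f p t * g p t)) with (fun p t => dp f p t * g p t + f p t * dp g p t).
    + apply Ck_plus; apply IHn; assumption.
    + fext. exact (dp_mult f g x x0 (proj1 (Df x x0)) (proj1 (Dg x x0))).
  - replace (dt (fun p t => f p t * g p t)) with (fun p t => dt f p t * g p t + f p t * dt g p t).
    + apply Ck_plus; apply IHn; assumption.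
    + fext. exact (dt_mult f g x x0 (proj2 (Df x x0)) (proj2 (Dg x x0))).
Qed.

Lemma Ck_inv n : forall f, Ck n f -> (forall p t, f p t <> 0) -> Ck n (fun p t => / f p t).
Proof.
  induction n; intros f Hf Hn; apply Ck_intro0;
    try (intros p t; apply continuity_2d_pt_inv; [apply (Ck_C2d _ _ Hf)| apply Hn]); try exact I.
  pose proof (Ck_mono _ _ Hf) as Hf'.
  destruct Hf as [_ [Df [Pf Tf]]].
  split; [intros p t; destruct (Df p t); split; apply ex_derive_inv; auto|].
  assert (IH := IHn f Hf' Hn).
  split.
  - replace (dp (fun p t => / f p t)) with (fun p t => - (dp f p t * (/ f p t * / f p t))).
    + apply Ck_opp, Ck_mult; [assumption|]. apply Ck_mult; assumption.
    + fext. exact (dp_inv f x x0 (proj1 (Df x x0)) (Hn x x0)).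
  - replace (dt (fun p t => / f p t)) with (fun p t => - (dt f p t * (/ f p t * / f p t))).
    + apply Ck_opp, Ck_mult; [assumption|]. apply Ck_mult; assumption.
    + fext. exact (dt_inv f x x0 (proj2 (Df x x0)) (Hn x x0)).
Qed.

Lemma Ck_sqrt n : forall f, Ck n f -> (forall p t, 0 < f p t) -> Ck n (fun p t => sqrt (f p t)).
Proof.
  induction n; intros f Hf Hn; apply Ck_intro0;
    try (intros p t; apply continuity_1d_2d_pt_comp; [apply continuity_pt_sqrt; left; apply Hn| apply (Ck_C2d _ _ Hf)]); try exact I.
  pose proof (Ck_mono _ _ Hf) as Hf'.
  destruct Hf as [_ [Df [Pf Tf]]].
  assert (Hs : forall p t, sqrt (f p t) <> 0).
  { intros p t. apply Rgt_not_eq, sqrt_lt_R0, Hn. }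
  split.
  { intros p t; destruct (Df p t) as [[d1 H1] [d2 H2]]; split.
    - eexists. apply (is_derive_sqrt (fun q => f q t)); [exact H1| apply Hn].
    - eexists. apply (is_derive_sqrt (fun s => f p s)); [exact H2| apply Hn]. }
  assert (IH := IHn f Hf' Hn).
  assert (IH2 : Ck n (fun p t => / (2 * sqrt (f p t)))).
  { apply Ck_inv; [apply Ck_mult; [apply Ck_const|exact IH]|].
    intros p t. specialize (Hs p t). lra. }
  split.
  - replace (dp (fun p t => sqrt (f p t))) with (fun p t => dp f p t * / (2 * sqrt (f p t))).
    + apply Ck_mult; assumption.
    + fext. destruct (Df x x0) as [[d1 H1] _].
      replace (dp f x x0) with d1 by (symmetry; apply is_derive_unique; exact H1).
      apply is_derive_unique. exact (is_derive_sqrt (fun q => f q x0) x d1 H1 (Hn x x0)).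
  - replace (dt (fun p t => sqrt (f p t))) with (fun p t => dt f p t * / (2 * sqrt (f p t))).
    + apply Ck_mult; assumption.
    + fext. destruct (Df x x0) as [_ [d1 H1]].
      replace (dt f x x0) with d1 by (symmetry; apply is_derive_unique; exact H1).
      apply is_derive_unique. exact (is_derive_sqrt (fun q => f x q) x0 d1 H1 (Hn x x0)).
Qed.

Lemma sm_dp f : smooth2 f -> smooth2 (dp f).
Proof. intros H n. destruct (H (S n)) as [_ [_ [H1 _]]]. exact H1. Qed.
Lemma sm_dt f : smooth2 f -> smooth2 (dt f).
Proof. intros H n. destruct (H (S n)) as [_ [_ [_ H1]]]. exact H1. Qed.
Lemma sm_exp f p t : smooth2 f -> ex_derive (fun q => f q t) p.
Proof. intros H. destruct (H 1%nat) as [_ [H1 _]]. exact (proj1 (H1 p t)). Qed.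
Lemma sm_ext f p t : smooth2 f -> ex_derive (fun s => f p s) t.
Proof. intros H. destruct (H 1%nat) as [_ [H1 _]]. exact (proj2 (H1 p t)). Qed.
Lemma sm_C2d f : smooth2 f -> C2d f.
Proof. intros H. apply (Ck_C2d 0), H. Qed.
Lemma sm_cont f p t : smooth2 f -> continuous (fun q => f q t) p.
Proof.
  intros H. apply (ex_derive_continuous (fun q => f q t)). apply sm_exp, H.
Qed.
Lemma sm_contt f p t : smooth2 f -> continuous (fun s => f p s) t.
Proof.
  intros H. apply (ex_derive_continuous (fun s => f p s)). apply sm_ext, H.
Qed.
Lemma sm_const c : smooth2 (fun _ _ => c).
Proof. intro n; apply Ck_const. Qed.
Lemma sm_plus f g : smooth2 f -> smooth2 g -> smooth2 (fun p t => f p t + g p t).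
Proof. intros H1 H2 n; apply Ck_plus; auto. Qed.
Lemma sm_opp f : smooth2 f -> smooth2 (fun p t => - f p t).
Proof. intros H1 n; apply Ck_opp; auto. Qed.
Lemma sm_minus f g : smooth2 f -> smooth2 g -> smooth2 (fun p t => f p t - g p t).
Proof. intros H1 H2. unfold Rminus. apply sm_plus; auto. apply sm_opp; auto. Qed.
Lemma sm_mult f g : smooth2 f -> smooth2 g -> smooth2 (fun p t => f p t * g p t).
Proof. intros H1 H2 n; apply Ck_mult; auto. Qed.
Lemma sm_inv f : smooth2 f -> (forall p t, f p t <> 0) -> smooth2 (fun p t => / f p t).
Proof. intros H1 H2 n; apply Ck_inv; auto. Qed.
Lemma sm_div f g : smooth2 f -> smooth2 g -> (forall p t, g p t <> 0) -> smooth2 (fun p t => f p t / g p t).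
Proof. intros H1 H2 H3. unfold Rdiv. apply sm_mult; auto. apply sm_inv; auto. Qed.
Lemma sm_sqrt f : smooth2 f -> (forall p t, 0 < f p t) -> smooth2 (fun p t => sqrt (f p t)).
Proof. intros H1 H2 n; apply Ck_sqrt; auto. Qed.
Lemma sm_pow2 f : smooth2 f -> smooth2 (fun p t => f p t ^ 2).
Proof. intros H. apply (sm_mult _ _ H) in H. intro n. specialize (H n).
  replace (fun p t => f p t ^ 2) with (fun p t => f p t * f p t); auto.
  fext. ring. Qed.

Lemma schwarz f p t : smooth2 f -> dp (dt f) p t = dt (dp f) p t.
Proof.
  intros H. unfold dp, dt.
  apply Schwarz.
  - exists (mkposreal 1 Rlt_0_1). intros u v _ _. repeat split.
    + apply sm_exp, H.
    + apply sm_ext, H.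
    + apply (sm_exp (dt f)), sm_dt, H.
    + apply (sm_ext (dp f)), sm_dp, H.
  - apply (sm_C2d (dp (dt f))). apply sm_dp, sm_dt, H.
  - apply (sm_C2d (dt (dp f))). apply sm_dt, sm_dp, H.
Qed.

Definition per (f : R -> R -> R) := forall p t, f (p + 1) t = f p t.

Lemma per_dp f : smooth2 f -> per f -> per (dp f).
Proof.
  intros Hs Hp p t.
  destruct (sm_exp f (p+1) t Hs) as [l Hl].
  assert (E1 : dp f (p+1) t = l) by (apply is_derive_unique; exact Hl).
  rewrite E1. symmetry.
  apply is_derive_unique.
  assert (H2 : is_derive (fun q : R => q + 1) p 1) by (auto_derive; auto; ring).
  pose proof (is_derive_comp (fun q => f q t) (fun q => q + 1) p l 1 Hl H2) as H3.
  replace l with (scal 1 l) by (unfold scal; simpl; unfold mult; simpl; ring).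
  eapply is_derive_ext; [| exact H3]. intros q. simpl. apply Hp.
Qed.

Lemma mono_deriv (f df : R -> R) a b : a <= b ->
  (forall x, a <= x <= b -> is_derive f x (df x)) -> (forall x, a <= x <= b -> 0 <= df x) -> f a <= f b.
Proof.
  intros Hab Hd Hp.
  pose proof (MVT_gen f a b df) as H. cbv zeta in H.
  rewrite (Rmin_left a b Hab), (Rmax_right a b Hab) in H.
  destruct H as [c [Hc Heq]].
  - intros x Hx. apply Hd. lra.
  - intros x Hx. apply continuity_pt_filterlim. apply (ex_derive_continuous f).
    exists (df x). apply Hd. lra.
  - assert (0 <= df c * (b - a)) by (apply Rmult_le_pos; [apply Hp; lra | lra]). lra.
Qed.

Lemma inf_approx (L : R -> R) : (forall t, 0 <= L t) ->
  exists m, (forall t, m <= L t) /\ (forall eps, 0 < eps -> exists t, L t < m + eps).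
Proof.
  intros HL.
  set (S := fun x => exists t, x = - L t).
  assert (Hb : bound S) by (exists 0; intros x [t ->]; specialize (HL t); lra).
  assert (Hne : exists x, S x) by (exists (- L 0); exists 0; reflexivity).
  destruct (completeness S Hb Hne) as [M [HM1 HM2]].
  exists (- M). split.
  - intros t. assert (- L t <= M) by (apply HM1; exists t; reflexivity). lra.
  - intros eps Heps. apply NNPP. intro Hn.
    assert (Hub : is_upper_bound S (M - eps)).
    { intros x [t ->]. apply Rnot_lt_le. intro Hlt. apply Hn. exists t. lra. }
    specialize (HM2 _ Hub). lra.
Qed.

Lemma final_lim (E L : R -> R) :
  (forall t, is_derive L t (E t / 2)) -> (forall t, 0 <= L t) ->
  (forall t, exists d, is_derive E t d /\ d <= 4 * E t) -> (forall t, 0 <= E t) ->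
  is_lim E m_infty 0.
Proof.
  intros HL HL0 HE HE0.
  assert (HdE : forall t, is_derive E t (Derive E t) /\ Derive E t <= 4 * E t).
  { intros t. destruct (HE t) as [d [H1 H2]]. rewrite (is_derive_unique _ _ _ H1). split; auto. }
  assert (Lmono : forall x y, x <= y -> L x <= L y).
  { intros x y Hxy. apply (mono_deriv L (fun t => E t / 2)); auto.
    intros z _. specialize (HE0 z). lra. }
  assert (Eback : forall t s, t <= s -> E s * exp (4 * (t - s)) <= E t).
  { intros t s Hts.
    set (K := fun u => - (E u * exp (- 4 * u))).
    assert (HK : K t <= K s).
    { apply (mono_deriv K (fun u => - ((Derive E u - 4 * E u) * exp (- 4 * u)))); auto.
      - intros u _. unfold K. auto_derive.
        + exists (Derive E u). apply HdE.
        + change (Derive (fun x => E x) u) with (Derive E u). ring.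
      - intros u _. destruct (HdE u) as [_ H2]. assert (H3 := exp_pos (- 4 * u)).
        assert (0 <= (4 * E u - Derive E u) * exp (-4 * u)) by (apply Rmult_le_pos; lra). lra. }
    unfold K in HK.
    replace (4 * (t - s)) with (-4 * s + - (-4 * t)) by ring.
    rewrite exp_plus, exp_Ropp.
    assert (H4 := exp_pos (-4 * t)).
    apply (Rmult_le_reg_r (exp (-4 * t))); auto.
    replace (E s * (exp (-4 * s) * / exp (-4 * t)) * exp (-4 * t)) with (E s * exp (-4 * s)) by (field; lra).
    lra. }
  set (c := (1 - exp (-4)) / 8).
  assert (Hc : 0 < c).
  { unfold c. assert (exp (-4) < 1).
    { rewrite <- exp_0. apply exp_increasing. lra. } lra. }
  assert (Key : forall s, c * E s <= L s - L (s - 1)).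
  { intros s.
    set (H := fun u => L u - E s * exp (4 * (u - s)) / 8).
    assert (HH : H (s - 1) <= H s).
    { apply (mono_deriv H (fun u => E u / 2 - E s * exp (4 * (u - s)) / 2)); [lra | |].
      - intros u _. unfold H. auto_derive.
        + exists (E u / 2). apply HL.
        + change (Derive (fun x => L x) u) with (Derive L u). replace (Derive L u) with (E u / 2) by (symmetry; apply is_derive_unique, HL). replace (u + - s) with (u - s) by ring. field.
      - intros u Hu. assert (E s * exp (4 * (u - s)) <= E u) by (apply Eback; lra). lra. }
    unfold H in HH. replace (4 * (s - s)) with 0 in HH by ring. rewrite exp_0 in HH.
    replace (4 * (s - 1 - s)) with (-4) in HH by ring. unfold c. lra. }
  destruct (inf_approx L HL0) as [m [Hm1 Hm2]].
  apply is_lim_spec. intros eps.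
  destruct (Hm2 (c * eps)) as [T HT].
  { apply Rmult_lt_0_compat; auto. apply cond_pos. }
  exists T. intros s Hs.
  assert (H1 := Key s). assert (H2 := Lmono s T (Rlt_le _ _ Hs)). assert (H3 := Hm1 (s - 1)).
  assert (H4 := HE0 s).
  rewrite Rminus_0_r, Rabs_pos_eq; auto.
  apply (Rmult_lt_reg_l c); auto. lra.
Qed.

Lemma per_RInt (f : R -> R) a : (forall x, continuous f x) -> (forall x, f (x + 1) = f x) ->
  RInt f 0 1 = RInt f a (a + 1).
Proof.
  intros Hc Hp.
  assert (Hex : forall u v, ex_RInt f u v) by (intros; apply (ex_RInt_continuous (V:=R_CompleteNormedModule)); intros; apply Hc).
  assert (H1 : RInt f 1 (a + 1) = RInt f 0 a).
  { assert (H := RInt_comp_lin (V:=R_CompleteNormedModule) f 1 1 0 a (Hex _ _)).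
    replace (1 * 0 + 1) with 1 in H by ring. replace (1 * a + 1) with (a + 1) in H by ring.
    rewrite <- H. apply RInt_ext. intros x _. change (1 * f (1 * x + 1) = f x).
    replace (1 * x + 1) with (x + 1) by ring. rewrite Hp. ring. }
  assert (H2 : RInt f a 0 + RInt f 0 1 = RInt f a 1) by (apply (RInt_Chasles (V:=R_CompleteNormedModule)); apply Hex).
  assert (H3 : RInt f a 1 + RInt f 1 (a + 1) = RInt f a (a + 1)) by (apply (RInt_Chasles (V:=R_CompleteNormedModule)); apply Hex).
  assert (H4 : RInt f a 0 = - RInt f 0 a) by (symmetry; apply (opp_RInt_swap (V:=R_CompleteNormedModule)); apply Hex).
  lra.
Qed.

Section Main.
Variables (lam p0 : R) (X Y : R -> R -> R).
Hypothesis sX : smooth2 X.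
Hypothesis sY : smooth2 Y.
Hypothesis nd : nondegenerate X Y.

Definition hh p t := X p t * dp Y p t - Y p t * dp X p t.
Definition kk p t := dp X p t * dp (dp Y) p t - dp Y p t * dp (dp X) p t.
Definition GG p t := kk p t / hh p t.
Hypothesis Gpos : forall p t, 0 < GG p t.

Lemma hnz p t : hh p t <> 0.
Proof. exact (proj1 (nd p t)). Qed.
Lemma knz p t : kk p t <> 0.
Proof. exact (proj2 (nd p t)). Qed.
Lemma g_def p t : cag X Y p t = sqrt (GG p t).
Proof. reflexivity. Qed.
Lemma gpos p t : 0 < cag X Y p t.
Proof. rewrite g_def. apply sqrt_lt_R0, Gpos. Qed.
Lemma gnz p t : cag X Y p t <> 0.
Proof. apply Rgt_not_eq, gpos. Qed.
Lemma g2 p t : cag X Y p t * cag X Y p t = GG p t.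
Proof. rewrite g_def. apply sqrt_sqrt. left; apply Gpos. Qed.

Lemma sX1 : smooth2 (dp X). Proof. exact (sm_dp X sX). Qed.
Lemma sY1 : smooth2 (dp Y). Proof. exact (sm_dp Y sY). Qed.
Lemma sX2 : smooth2 (dp (dp X)). Proof. exact (sm_dp _ sX1). Qed.
Lemma sY2 : smooth2 (dp (dp Y)). Proof. exact (sm_dp _ sY1). Qed.
Lemma sX3 : smooth2 (dp (dp (dp X))). Proof. exact (sm_dp _ sX2). Qed.
Lemma sY3 : smooth2 (dp (dp (dp Y))). Proof. exact (sm_dp _ sY2). Qed.

Lemma s_h : smooth2 hh.
Proof. exact (sm_minus _ _ (sm_mult _ _ sX sY1) (sm_mult _ _ sY sX1)). Qed.
Lemma s_k : smooth2 kk.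
Proof. exact (sm_minus _ _ (sm_mult _ _ sX1 sY2) (sm_mult _ _ sY1 sX2)). Qed.
Lemma s_G : smooth2 GG.
Proof. exact (sm_div _ _ s_k s_h hnz). Qed.
Lemma s_g : smooth2 (cag X Y).
Proof. exact (sm_sqrt _ s_G Gpos). Qed.
Lemma s_Xxi : smooth2 (Xxi X Y).
Proof. exact (sm_div _ _ sX1 s_g gnz). Qed.
Lemma s_Yxi : smooth2 (Yxi X Y).
Proof. exact (sm_div _ _ sY1 s_g gnz). Qed.
Lemma s_Xxixi : smooth2 (Xxixi X Y).
Proof. exact (sm_div _ _ (sm_dp _ s_Xxi) s_g gnz). Qed.
Lemma s_Yxixi : smooth2 (Yxixi X Y).
Proof. exact (sm_div _ _ (sm_dp _ s_Yxi) s_g gnz). Qed.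
Lemma den_eq p t : det2 (Xxi X Y p t) (Yxi X Y p t) (X p t) (Y p t) = - hh p t / cag X Y p t.
Proof. unfold det2, Xxi, Yxi, hh, Xp, Yp. field. apply gnz. Qed.
Lemma den_nz p t : det2 (Xxi X Y p t) (Yxi X Y p t) (X p t) (Y p t) <> 0.
Proof. rewrite den_eq. unfold Rdiv. apply Rmult_integral_contrapositive_currified.
  - apply Ropp_neq_0_compat, hnz.
  - apply Rinv_neq_0_compat, gnz.
Qed.
Lemma s_phi : smooth2 (caphi X Y).
Proof.
  exact (sm_div _ _ (sm_minus _ _ (sm_mult _ _ s_Xxixi sY) (sm_mult _ _ s_Yxixi sX))
                    (sm_minus _ _ (sm_mult _ _ s_Xxi sY) (sm_mult _ _ s_Yxi sX)) den_nz).
Qed.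

Definition psi p t := caphi X Y p t * cag X Y p t.
Definition gam p t := caphi X Y p t / 2 / cag X Y p t.
Lemma s_psi : smooth2 psi.
Proof. exact (sm_mult _ _ s_phi s_g). Qed.
Lemma s_gam : smooth2 gam.
Proof. exact (sm_div _ _ (sm_div _ _ s_phi (sm_const 2) (fun _ _ => ltac:(lra))) s_g gnz). Qed.

Ltac smt := first [ exact sX | exact sY | exact s_g | exact s_h | exact s_k | exact s_G
  | exact s_phi | exact s_psi | exact s_gam | assumption | refine (sm_dp _ _); smt ].

Ltac exd := match goal with
  | |- ex_derive (fun x => ?f x ?t) ?p => exact (sm_exp f p t ltac:(smt))
  | |- ex_derive (fun x => ?f ?p x) ?t => exact (sm_ext f p t ltac:(smt))
  end.

Lemma L_hp p t : dp hh p t = X p t * dp (dp Y) p t - Y p t * dp (dp X) p t.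
Proof.
  unfold dp at 1. unfold hh. apply is_derive_unique. auto_derive.
  - repeat split; exd.
  - unfold dp. ring.
Qed.

Lemma L_Xxi p t : dp (Xxi X Y) p t = dp (dp X) p t / cag X Y p t - dp X p t * dp (cag X Y) p t / (cag X Y p t)^2.
Proof.
  unfold dp at 1. unfold Xxi. apply is_derive_unique. auto_derive.
  - repeat split; try exd. apply gnz.
  - unfold Xp, dp. field. apply gnz.
Qed.

Lemma L_Yxi p t : dp (Yxi X Y) p t = dp (dp Y) p t / cag X Y p t - dp Y p t * dp (cag X Y) p t / (cag X Y p t)^2.
Proof.
  unfold dp at 1. unfold Yxi. apply is_derive_unique. auto_derive.
  - repeat split; try exd. apply gnz.
  - unfold Yp, dp. field. apply gnz.
Qed.

Lemma alg_I1 x0 y0 x1 y1 x2 y2 g gp : g <> 0 -> x0*y1 - y0*x1 <> 0 ->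
 (((x2/g - x1*gp/g^2)/g*y0 - (y2/g - y1*gp/g^2)/g*x0) / (x1/g*y0 - y1/g*x0)) * g = (x0*y2 - y0*x2)/(x0*y1-y0*x1) - gp/g.
Proof.
  intros Hg Hh. field. split; auto. split; auto.
  intro H. apply Hh.
  replace (x0*y1 - y0*x1) with (-(x1*y0 - y1*x0)) by ring. rewrite H. ring.
Qed.

Lemma L_I1 p t : caphi X Y p t * cag X Y p t = dp hh p t / hh p t - dp (cag X Y) p t / cag X Y p t.
Proof.
  unfold caphi, Xxixi, Yxixi. rewrite L_Xxi, L_Yxi, L_hp.
  unfold det2, Xxi, Yxi, Xp, Yp, hh. apply alg_I1. apply gnz. apply hnz.
Qed.

Lemma L_kp p t : dp kk p t = dp X p t * dp (dp (dp Y)) p t - dp Y p t * dp (dp (dp X)) p t.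
Proof.
  unfold dp at 1. unfold kk. apply is_derive_unique. auto_derive.
  - repeat split; exd.
  - unfold dp. ring.
Qed.

Lemma L_Gp p t : dp GG p t = (dp kk p t * hh p t - kk p t * dp hh p t) / (hh p t)^2.
Proof.
  unfold dp at 1. unfold GG. apply is_derive_unique. auto_derive.
  - repeat split; try exd. apply hnz.
  - unfold dp. field. apply hnz.
Qed.

Lemma L_gp p t : dp (cag X Y) p t = dp GG p t / (2 * cag X Y p t).
Proof.
  unfold dp at 1. apply is_derive_unique.
  apply (is_derive_sqrt (fun q => GG q t)).
  - destruct (sm_exp GG p t s_G) as [l Hl].
    replace (dp GG p t) with l by (symmetry; apply is_derive_unique; exact Hl). exact Hl.
  - apply Gpos.
Qed.

Lemma L_gt p t : dt (cag X Y) p t = dt GG p t / (2 * cag X Y p t).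
Proof.
  unfold dt at 1. apply is_derive_unique.
  apply (is_derive_sqrt (fun s => GG p s)).
  - destruct (sm_ext GG p t s_G) as [l Hl].
    replace (dt GG p t) with l by (symmetry; apply is_derive_unique; exact Hl). exact Hl.
  - apply Gpos.
Qed.

Lemma L_Gt p t : dt GG p t = (dt kk p t * hh p t - kk p t * dt hh p t) / (hh p t)^2.
Proof.
  unfold dt at 1. unfold GG. apply is_derive_unique. auto_derive.
  - repeat split; try exd. apply hnz.
  - unfold dt. field. apply hnz.
Qed.

Lemma L_ht p t : dt hh p t = dt X p t * dp Y p t + X p t * dt (dp Y) p t - dt Y p t * dp X p t - Y p t * dt (dp X) p t.
Proof.
  unfold dt at 1. unfold hh. apply is_derive_unique. auto_derive.
  - repeat split; exd.
  - unfold dt. ring.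
Qed.

Lemma L_kt p t : dt kk p t = dt (dp X) p t * dp (dp Y) p t + dp X p t * dt (dp (dp Y)) p t - dt (dp Y) p t * dp (dp X) p t - dp Y p t * dt (dp (dp X)) p t.
Proof.
  unfold dt at 1. unfold kk. apply is_derive_unique. auto_derive.
  - repeat split; exd.
  - unfold dt. ring.
Qed.

Lemma L_gamp p t : dp gam p t = dp (caphi X Y) p t / 2 / cag X Y p t - caphi X Y p t / 2 * dp (cag X Y) p t / (cag X Y p t)^2.
Proof.
  unfold dp at 1. unfold gam. apply is_derive_unique. auto_derive.
  - repeat split; try exd. apply gnz.
  - unfold dp. field. apply gnz.
Qed.

Lemma L_psip p t : dp psi p t = dp (caphi X Y) p t * cag X Y p t + caphi X Y p t * dp (cag X Y) p t.
Proof.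
  unfold dp at 1. unfold psi. apply is_derive_unique. auto_derive.
  - repeat split; try exd.
  - unfold dp. ring.
Qed.

Definition aa p t := lam + cumphi X Y p0 p t.

Lemma a_der p t : is_derive (fun q => aa q t) p (psi p t).
Proof.
  unfold aa, cumphi.
  set (F := fun r => caphi X Y r t * cag X Y r t).
  assert (HF : forall q, continuous F q) by (intro q; exact (sm_cont psi q t s_psi)).
  assert (H : is_derive (fun q => RInt F p0 q) p (F p)).
  { apply (is_derive_RInt F (fun q => RInt F p0 q) p0 p).
    - apply filter_forall. intros b. apply (RInt_correct (V:=R_CompleteNormedModule) F p0 b).
      apply (ex_RInt_continuous (V:=R_CompleteNormedModule) F). intros; apply HF.
    - apply HF. }
  replace (psi p t) with (0 + F p) by (unfold F, psi; ring).
  assert (Hc : is_derive (fun _ : R => lam) p 0) by (auto_derive; auto).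
  exact (is_derive_plus (fun _ : R => lam) (fun q => RInt F p0 q) p 0 (F p) Hc H).
Qed.

Lemma ex_a p t : ex_derive (fun q => aa q t) p.
Proof. exists (psi p t). exact (a_der p t). Qed.

Lemma strip_loc p (P : R -> Prop) : p0 < p < p0 + 1 -> (forall q, p0 < q < p0 + 1 -> P q) -> locally p P.
Proof.
  intros Hp HP.
  assert (He : 0 < Rmin (p - p0) (p0 + 1 - p)) by (apply Rmin_glb_lt; lra).
  exists (mkposreal _ He). intros y Hy. apply HP.
  change (Rabs (y - p) < Rmin (p - p0) (p0 + 1 - p)) in Hy.
  assert (H1 := Rmin_l (p - p0) (p0 + 1 - p)). assert (H2 := Rmin_r (p - p0) (p0 + 1 - p)).
  apply Rabs_def2 in Hy. lra.
Qed.

Section Comp.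
Variable Z : R -> R -> R.
Hypothesis sZ : smooth2 Z.
Hypothesis flZ : forall p t, p0 <= p < p0 + 1 -> dt Z p t = aa p t * Z p t + gam p t * dp Z p t.

Lemma dpdtZ p t : p0 < p < p0 + 1 ->
  dp (dt Z) p t = psi p t * Z p t + aa p t * dp Z p t + dp gam p t * dp Z p t + gam p t * dp (dp Z) p t.
Proof.
  intros Hp. unfold dp at 1.
  rewrite (Derive_ext_loc (fun q => dt Z q t) (fun q => aa q t * Z q t + gam q t * dp Z q t)).
  2: { apply strip_loc; auto. intros q Hq. apply flZ. lra. }
  apply is_derive_unique. auto_derive.
  - repeat split; try exd. apply ex_a.
  - replace (Derive (fun x => aa x t) p) with (psi p t) by (symmetry; apply is_derive_unique, a_der).
    unfold dp. ring.
Qed.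

Lemma dpdpdtZ p t : p0 < p < p0 + 1 ->
  dp (dp (dt Z)) p t = dp psi p t * Z p t + 2 * psi p t * dp Z p t + aa p t * dp (dp Z) p t
     + dp (dp gam) p t * dp Z p t + 2 * dp gam p t * dp (dp Z) p t + gam p t * dp (dp (dp Z)) p t.
Proof.
  intros Hp. unfold dp at 1.
  rewrite (Derive_ext_loc (fun q => dp (dt Z) q t) (fun q => psi q t * Z q t + aa q t * dp Z q t + dp gam q t * dp Z q t + gam q t * dp (dp Z) q t)).
  2: { apply strip_loc; auto. intros q Hq. apply dpdtZ. lra. }
  apply is_derive_unique. auto_derive.
  - repeat split; try exd. apply ex_a.
  - replace (Derive (fun x => aa x t) p) with (psi p t) by (symmetry; apply is_derive_unique, a_der).
    unfold dp. ring.
Qed.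

Lemma dtZ1 p t : dt (dp Z) p t = dp (dt Z) p t.
Proof. symmetry. apply schwarz, sZ. Qed.

Lemma dtZ2 p t : dt (dp (dp Z)) p t = dp (dp (dt Z)) p t.
Proof.
  rewrite <- (schwarz (dp Z) p t (sm_dp Z sZ)).
  change (Derive (fun q => dt (dp Z) q t) p = Derive (fun q => dp (dt Z) q t) p).
  apply Derive_ext. intros q. apply dtZ1.
Qed.
End Comp.

Hypothesis fl : ca_flow lam p0 X Y.

Lemma flowX p t : p0 <= p < p0 + 1 -> dt X p t = aa p t * X p t + gam p t * dp X p t.
Proof. intros H. rewrite (proj1 (fl p t H)). unfold aa, gam, Xxi, Xp. field. apply gnz. Qed.
Lemma flowY p t : p0 <= p < p0 + 1 -> dt Y p t = aa p t * Y p t + gam p t * dp Y p t.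
Proof. intros H. rewrite (proj2 (fl p t H)). unfold aa, gam, Yxi, Yp. field. apply gnz. Qed.


Lemma L_ht2 p t : p0 < p < p0 + 1 ->
  dt hh p t = 2 * aa p t * hh p t + dp gam p t * hh p t + gam p t * dp hh p t.
Proof.
  intros Hp. rewrite L_ht, (dtZ1 X sX p t), (dtZ1 Y sY p t), (dpdtZ X sX flowX p t Hp), (dpdtZ Y sY flowY p t Hp).
  rewrite (flowX p t ltac:(lra)), (flowY p t ltac:(lra)), L_hp. unfold hh. ring.
Qed.

Lemma L_kt2 p t : p0 < p < p0 + 1 ->
  dt kk p t = psi p t * dp hh p t - dp psi p t * hh p t + 2 * aa p t * kk p t
     + 3 * dp gam p t * kk p t + gam p t * dp kk p t.
Proof.
  intros Hp. rewrite L_kt, (dtZ1 X sX p t), (dtZ1 Y sY p t), (dtZ2 X sX p t), (dtZ2 Y sY p t).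
  rewrite (dpdtZ X sX flowX p t Hp), (dpdtZ Y sY flowY p t Hp), (dpdpdtZ X sX flowX p t Hp), (dpdpdtZ Y sY flowY p t Hp).
  rewrite L_hp, L_kp. unfold hh, kk. ring.
Qed.

Lemma alg_dtg2 h hp k kp g gp f fp a ps psp gm gamp dth dtk dtG dtg dG :
  h <> 0 -> g <> 0 -> g * g = k / h -> gp = dG / (2 * g) -> dG = (kp * h - k * hp) / h ^ 2 ->
  f * g = hp / h - gp / g -> ps = f * g -> psp = fp * g + f * gp -> gm = f / 2 / g ->
  gamp = fp / 2 / g - f / 2 * gp / g ^ 2 ->
  dth = 2 * a * h + gamp * h + gm * hp ->
  dtk = ps * hp - psp * h + 2 * a * k + 3 * gamp * k + gm * kp ->
  dtG = (dtk * h - k * dth) / h ^ 2 -> dtg = dtG / (2 * g) -> dtg = g * f ^ 2 / 2.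
Proof.
  intros Hh Hg Hk Hgp HdG Hf Hps Hpsp Hgm Hgamp Hdth Hdtk HdtG Hdtg.
  assert (Hk' : k = g^2 * h) by (apply (f_equal (fun z => z * h)) in Hk; field_simplify in Hk; [| auto]; rewrite <- Hk; field).
  subst dtg dtG dtk dth gamp gm psp ps. rewrite HdG in Hgp. clear HdG.
  assert (Hf' : f = (hp/h - gp/g)/g) by (rewrite <- Hf; field; auto).
  clear Hf Hk. subst f. subst gp. subst k. field. auto.
Qed.

Lemma L_gt2 p t : p0 < p < p0 + 1 -> dt (cag X Y) p t = cag X Y p t * caphi X Y p t ^ 2 / 2.
Proof.
  intros Hp.
  apply (alg_dtg2 (hh p t) (dp hh p t) (kk p t) (dp kk p t) (cag X Y p t) (dp (cag X Y) p t)
    (caphi X Y p t) (dp (caphi X Y) p t) (aa p t) (psi p t) (dp psi p t) (gam p t) (dp gam p t)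
    (dt hh p t) (dt kk p t) (dt GG p t) (dt (cag X Y) p t) (dp GG p t)).
  - apply hnz.
  - apply gnz.
  - apply g2.
  - apply L_gp.
  - apply L_Gp.
  - apply L_I1.
  - reflexivity.
  - apply L_psip.
  - reflexivity.
  - apply L_gamp.
  - apply L_ht2; auto.
  - apply L_kt2; auto.
  - apply L_Gt.
  - apply L_gt.
Qed.

Ltac nz := repeat (apply Rmult_integral_contrapositive_currified); first [apply gnz | apply hnz | apply R1_neq_R0 | lra].

Lemma L_gampp p t : dp (dp gam) p t =
  dp (dp (caphi X Y)) p t / 2 / cag X Y p t - dp (caphi X Y) p t / 2 * dp (cag X Y) p t / cag X Y p t ^ 2
  - (dp (caphi X Y) p t / 2 * dp (cag X Y) p t / cag X Y p t ^ 2
     + caphi X Y p t / 2 * dp (dp (cag X Y)) p t / cag X Y p t ^ 2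
     - caphi X Y p t * dp (cag X Y) p t * dp (cag X Y) p t / cag X Y p t ^ 3).
Proof.
  unfold dp at 1.
  rewrite (Derive_ext (fun q => dp gam q t) (fun q => dp (caphi X Y) q t / 2 / cag X Y q t - caphi X Y q t / 2 * dp (cag X Y) q t / (cag X Y q t)^2)) by (intro; apply L_gamp).
  apply is_derive_unique. auto_derive.
  - repeat split; try exd; nz.
  - unfold dp. field. apply gnz.
Qed.

Lemma L_psip2 p t : dp psi p t =
  (dp (dp hh) p t * hh p t - dp hh p t * dp hh p t) / hh p t ^ 2
  - (dp (dp (cag X Y)) p t * cag X Y p t - dp (cag X Y) p t * dp (cag X Y) p t) / cag X Y p t ^ 2.
Proof.
  unfold dp at 1.
  rewrite (Derive_ext (fun q => psi q t) (fun q => dp hh q t / hh q t - dp (cag X Y) q t / cag X Y q t)) by (intro; apply L_I1).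
  apply is_derive_unique. auto_derive.
  - repeat split; try exd; nz.
  - unfold dp. field. split; [apply gnz | apply hnz].
Qed.

Lemma L_dpdth p t : p0 < p < p0 + 1 ->
  dp (dt hh) p t = 2 * psi p t * hh p t + 2 * aa p t * dp hh p t + dp (dp gam) p t * hh p t
    + 2 * dp gam p t * dp hh p t + gam p t * dp (dp hh) p t.
Proof.
  intros Hp. unfold dp at 1.
  rewrite (Derive_ext_loc (fun q => dt hh q t) (fun q => 2 * aa q t * hh q t + dp gam q t * hh q t + gam q t * dp hh q t)).
  2: { apply strip_loc; auto. intros q Hq. apply L_ht2. lra. }
  apply is_derive_unique. auto_derive.
  - repeat split; try exd. apply ex_a.
  - replace (Derive (fun x => aa x t) p) with (psi p t) by (symmetry; apply is_derive_unique, a_der).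
    unfold dp. ring.
Qed.

Lemma L_dpdtg p t : p0 < p < p0 + 1 ->
  dp (dt (cag X Y)) p t = dp (cag X Y) p t * caphi X Y p t ^ 2 / 2 + cag X Y p t * caphi X Y p t * dp (caphi X Y) p t.
Proof.
  intros Hp. unfold dp at 1.
  rewrite (Derive_ext_loc (fun q => dt (cag X Y) q t) (fun q => cag X Y q t * caphi X Y q t ^ 2 / 2)).
  2: { apply strip_loc; auto. intros q Hq. apply L_gt2. lra. }
  apply is_derive_unique. auto_derive.
  - repeat split; try exd.
  - unfold dp. field.
Qed.

Lemma L_dtpsi_raw p t : dt psi p t =
  (dp (dt hh) p t * hh p t - dp hh p t * dt hh p t) / hh p t ^ 2
  - (dp (dt (cag X Y)) p t * cag X Y p t - dp (cag X Y) p t * dt (cag X Y) p t) / cag X Y p t ^ 2.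
Proof.
  rewrite (schwarz hh p t s_h), (schwarz (cag X Y) p t s_g).
  unfold dt at 1.
  rewrite (Derive_ext (fun s => psi p s) (fun s => dp hh p s / hh p s - dp (cag X Y) p s / cag X Y p s)) by (intro; apply L_I1).
  apply is_derive_unique. auto_derive.
  - repeat split; try exd; nz.
  - unfold dt. field. split; [apply gnz | apply hnz].
Qed.

Lemma alg_dtpsi2 h hp hpp g gp gpp f fp fpp a ps psp gm gamp gampp dth dthp dtg dtgp dtps :
  h <> 0 -> g <> 0 -> f * g = hp / h - gp / g ->
  psp = fp * g + f * gp -> psp = (hpp * h - hp * hp) / h ^ 2 - (gpp * g - gp * gp) / g ^ 2 ->
  ps = f * g -> gm = f / 2 / g -> gamp = fp / 2 / g - f / 2 * gp / g ^ 2 ->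
  gampp = fpp / 2 / g - fp / 2 * gp / g ^ 2 - (fp / 2 * gp / g ^ 2 + f / 2 * gpp / g ^ 2 - f * gp * gp / g ^ 3) ->
  dth = 2 * a * h + gamp * h + gm * hp ->
  dthp = 2 * ps * h + 2 * a * hp + gampp * h + 2 * gamp * hp + gm * hpp ->
  dtg = g * f ^ 2 / 2 -> dtgp = gp * f ^ 2 / 2 + g * f * fp ->
  dtps = (dthp * h - hp * dth) / h ^ 2 - (dtgp * g - gp * dtg) / g ^ 2 ->
  dtps = 2 * f * g + fpp / (2 * g) - fp * gp / (2 * g ^ 2).
Proof.
  intros Hh Hg H1 Hpsp H2 Hps Hgm Hgamp Hgampp Hdth Hdthp Hdtg Hdtgp Hdtps.
  subst dtps dtgp dtg dthp dth gampp gamp gm ps. rewrite Hpsp in H2. clear Hpsp.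
  assert (Ehpp : hpp = (h^2*(fp*g + f*gp + (gpp*g - gp*gp)/g^2) + hp*hp)/h).
  { rewrite H2. field. auto. }
  assert (Ehp : hp = h*(f*g + gp/g)).
  { rewrite H1. field. auto. }
  clear H1 H2. subst hpp. subst hp. field. auto.
Qed.

Lemma L_dtpsi p t : p0 < p < p0 + 1 ->
  dt psi p t = 2 * caphi X Y p t * cag X Y p t + dp (dp (caphi X Y)) p t / (2 * cag X Y p t)
     - dp (caphi X Y) p t * dp (cag X Y) p t / (2 * cag X Y p t ^ 2).
Proof.
  intros Hp.
  apply (alg_dtpsi2 (hh p t) (dp hh p t) (dp (dp hh) p t) (cag X Y p t) (dp (cag X Y) p t) (dp (dp (cag X Y)) p t)
    (caphi X Y p t) (dp (caphi X Y) p t) (dp (dp (caphi X Y)) p t) (aa p t) (psi p t) (dp psi p t)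
    (gam p t) (dp gam p t) (dp (dp gam) p t) (dt hh p t) (dp (dt hh) p t) (dt (cag X Y) p t)
    (dp (dt (cag X Y)) p t) (dt psi p t)).
  - apply hnz.
  - apply gnz.
  - apply L_I1.
  - apply L_psip.
  - apply L_psip2.
  - reflexivity.
  - reflexivity.
  - apply L_gamp.
  - apply L_gampp.
  - apply L_ht2; auto.
  - apply L_dpdth; auto.
  - apply L_gt2; auto.
  - apply L_dpdtg; auto.
  - apply L_dtpsi_raw.
Qed.

Lemma L_dtE_raw p t : Derive (fun s => caphi X Y p s ^ 2 * cag X Y p s) t =
  2 * (psi p t / cag X Y p t) * ((dt psi p t * cag X Y p t - psi p t * dt (cag X Y) p t) / cag X Y p t ^ 2) * cag X Y p t
  + (psi p t / cag X Y p t) ^ 2 * dt (cag X Y) p t.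
Proof.
  rewrite (Derive_ext (fun s => caphi X Y p s ^ 2 * cag X Y p s) (fun s => (psi p s / cag X Y p s) ^ 2 * cag X Y p s)).
  2: { intro s. unfold psi. field. apply gnz. }
  apply is_derive_unique. auto_derive.
  - repeat split; try exd; nz.
  - unfold dt. field. apply gnz.
Qed.

Lemma alg_dtE2 g gp f fp fpp ps dtps dtg D :
  g <> 0 -> ps = f * g -> dtps = 2 * f * g + fpp / (2 * g) - fp * gp / (2 * g ^ 2) ->
  dtg = g * f ^ 2 / 2 ->
  D = 2 * (ps / g) * ((dtps * g - ps * dtg) / g ^ 2) * g + (ps / g) ^ 2 * dtg ->
  D = 4 * f ^ 2 * g - f ^ 4 * g / 2 + f * (fpp / g - fp * gp / g ^ 2).
Proof. intros Hg Hps Hdtps Hdtg HD. subst. field. auto. Qed.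

Lemma L_dtE p t : p0 < p < p0 + 1 ->
  Derive (fun s => caphi X Y p s ^ 2 * cag X Y p s) t =
  4 * caphi X Y p t ^ 2 * cag X Y p t - caphi X Y p t ^ 4 * cag X Y p t / 2
  + caphi X Y p t * (dp (dp (caphi X Y)) p t / cag X Y p t - dp (caphi X Y) p t * dp (cag X Y) p t / cag X Y p t ^ 2).
Proof.
  intros Hp.
  apply (alg_dtE2 (cag X Y p t) (dp (cag X Y) p t) (caphi X Y p t) (dp (caphi X Y) p t) (dp (dp (caphi X Y)) p t)
    (psi p t) (dt psi p t) (dt (cag X Y) p t)).
  - apply gnz.
  - reflexivity.
  - apply L_dtpsi; auto.
  - apply L_gt2; auto.
  - apply L_dtE_raw.
Qed.

Hypothesis perX : per X.
Hypothesis perY : per Y.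

Lemma per_X1 : per (dp X). Proof. exact (per_dp X sX perX). Qed.
Lemma per_Y1 : per (dp Y). Proof. exact (per_dp Y sY perY). Qed.
Lemma per_X2 : per (dp (dp X)). Proof. exact (per_dp _ sX1 per_X1). Qed.
Lemma per_Y2 : per (dp (dp Y)). Proof. exact (per_dp _ sY1 per_Y1). Qed.
Lemma per_h : per hh.
Proof. intros p t. unfold hh. rewrite perX, perY, per_X1, per_Y1. reflexivity. Qed.
Lemma per_k : per kk.
Proof. intros p t. unfold kk. rewrite per_X1, per_Y1, per_X2, per_Y2. reflexivity. Qed.
Lemma per_G : per GG.
Proof. intros p t. unfold GG. rewrite per_h, per_k. reflexivity. Qed.
Lemma per_g : per (cag X Y).
Proof. intros p t. rewrite !g_def, per_G. reflexivity. Qed.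
Lemma per_Xxi : per (Xxi X Y).
Proof. intros p t. unfold Xxi, Xp. rewrite per_X1, per_g. reflexivity. Qed.
Lemma per_Yxi : per (Yxi X Y).
Proof. intros p t. unfold Yxi, Yp. rewrite per_Y1, per_g. reflexivity. Qed.
Lemma per_Xxixi : per (Xxixi X Y).
Proof. intros p t. unfold Xxixi. rewrite (per_dp _ s_Xxi per_Xxi), per_g. reflexivity. Qed.
Lemma per_Yxixi : per (Yxixi X Y).
Proof. intros p t. unfold Yxixi. rewrite (per_dp _ s_Yxi per_Yxi), per_g. reflexivity. Qed.
Lemma per_phi : per (caphi X Y).
Proof. intros p t. unfold caphi. rewrite per_Xxixi, per_Yxixi, per_Xxi, per_Yxi, perX, perY. reflexivity. Qed.

Definition BB p t := caphi X Y p t * (dp (caphi X Y) p t / cag X Y p t).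
Lemma per_B : per BB.
Proof. intros p t. unfold BB. rewrite per_phi, (per_dp _ s_phi per_phi), per_g. reflexivity. Qed.
Lemma s_B : smooth2 BB.
Proof. exact (sm_mult _ _ s_phi (sm_div _ _ (sm_dp _ s_phi) s_g gnz)). Qed.
Lemma L_Bp p t : dp BB p t = dp (caphi X Y) p t * (dp (caphi X Y) p t / cag X Y p t)
   + caphi X Y p t * (dp (dp (caphi X Y)) p t / cag X Y p t - dp (caphi X Y) p t * dp (cag X Y) p t / cag X Y p t ^ 2).
Proof.
  unfold dp at 1. unfold BB. apply is_derive_unique. auto_derive.
  - repeat split; try exd; nz.
  - unfold dp. field. apply gnz.
Qed.

Definition FE p t := caphi X Y p t ^ 2 * cag X Y p t.
Lemma s_FE : smooth2 FE.
Proof. exact (sm_mult _ _ (sm_pow2 _ s_phi) s_g). Qed.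

Lemma cont_swap f x y : continuity_2d_pt f x y -> continuity_2d_pt (fun u v => f v u) y x.
Proof. intros H eps. destruct (H eps) as [d Hd]. exists d. intros u v Hu Hv. apply Hd; auto. Qed.

Lemma RInt_param_der (F : R -> R -> R) (sF : smooth2 F) a b t :
  is_derive (fun s => RInt (fun p => F p s) a b) t (RInt (fun p => dt F p t) a b).
Proof.
  apply (is_derive_RInt_param (fun s p => F p s) a b t).
  - apply filter_forall. intros x p _. exact (sm_ext F p x sF).
  - intros p _. apply (cont_swap (dt F) p t). apply (sm_C2d _ (sm_dt F sF)).
  - apply filter_forall. intros y. apply (ex_RInt_continuous (V:=R_CompleteNormedModule)).
    intros z _. exact (sm_cont F z y sF).
Qed.

Lemma exR (F : R -> R -> R) (sF : smooth2 F) t a b : ex_RInt (fun p => F p t) a b.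
Proof. apply (ex_RInt_continuous (V:=R_CompleteNormedModule)). intros z _. exact (sm_cont F z t sF). Qed.

Definition Et t := RInt (fun p => FE p t) p0 (p0 + 1).
Definition Lt t := RInt (fun p => cag X Y p t) p0 (p0 + 1).

Lemma Et_caE t : caE X Y t = Et t.
Proof.
  unfold caE, Et. apply (per_RInt (fun p => FE p t)).
  - intros x. exact (sm_cont FE x t s_FE).
  - intros x. unfold FE. rewrite per_phi, per_g. reflexivity.
Qed.

Lemma Lt_der t : is_derive Lt t (Et t / 2).
Proof.
  assert (H := RInt_param_der (cag X Y) s_g p0 (p0 + 1) t).
  replace (Et t / 2) with (RInt (fun p => dt (cag X Y) p t) p0 (p0 + 1)). exact H.
  unfold Et. rewrite (RInt_ext (fun p => dt (cag X Y) p t) (fun p => scal (/ 2) (FE p t))).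
  - rewrite (RInt_scal (V:=R_CompleteNormedModule)). 2: exact (exR FE s_FE t _ _).
    change (/ 2 * RInt (fun p => FE p t) p0 (p0 + 1) = RInt (fun p => FE p t) p0 (p0 + 1) / 2). field.
  - intros x Hx. rewrite Rmin_left, Rmax_right in Hx by lra.
    rewrite L_gt2 by lra. change (cag X Y x t * caphi X Y x t ^ 2 / 2 = / 2 * FE x t). unfold FE. field.
Qed.

Lemma Et_der t : exists d, is_derive Et t d /\ d <= 4 * Et t.
Proof.
  exists (RInt (fun p => dt FE p t) p0 (p0 + 1)). split.
  - exact (RInt_param_der FE s_FE p0 (p0 + 1) t).
  - assert (Hle : RInt (fun p => dt FE p t) p0 (p0 + 1) <= RInt (fun p => 4 * FE p t + dp BB p t) p0 (p0 + 1)).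
    { apply RInt_le; [lra | exact (exR (dt FE) (sm_dt _ s_FE) t _ _) | |].
      - exact (exR (fun p t => 4 * FE p t + dp BB p t) (sm_plus _ _ (sm_mult _ _ (sm_const 4) s_FE) (sm_dp _ s_B)) t _ _).
      - intros x Hx. unfold dt at 1. unfold FE at 1. rewrite L_dtE by lra. rewrite L_Bp. unfold FE.
        assert (Hg := gpos x t).
        assert (H1 : 0 <= caphi X Y x t ^ 4 * cag X Y x t) by (apply Rmult_le_pos; [| lra]; 
          replace (caphi X Y x t ^ 4) with ((caphi X Y x t ^ 2) ^ 2) by ring; apply pow2_ge_0).
        assert (H2 : 0 <= dp (caphi X Y) x t * (dp (caphi X Y) x t / cag X Y x t)).
        { replace (dp (caphi X Y) x t * (dp (caphi X Y) x t / cag X Y x t)) with ((dp (caphi X Y) x t)^2 * / cag X Y x t) by (field; lra).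
          apply Rmult_le_pos; [apply pow2_ge_0 | left; apply Rinv_0_lt_compat; lra]. }
        lra. }
    assert (Hsplit : RInt (fun p => 4 * FE p t + dp BB p t) p0 (p0 + 1) = 4 * Et t + (BB (p0 + 1) t - BB p0 t)).
    { rewrite (RInt_plus (V:=R_CompleteNormedModule) (fun p => 4 * FE p t) (fun p => dp BB p t)).
      - rewrite (RInt_scal (V:=R_CompleteNormedModule) (fun p => FE p t)). 2: exact (exR FE s_FE t _ _).
        change (4 * Et t + RInt (Derive (fun q => BB q t)) p0 (p0 + 1) = 4 * Et t + (BB (p0 + 1) t - BB p0 t)).
        rewrite RInt_Derive; auto.
        + intros x _. exact (sm_exp BB x t s_B).
        + intros x _. exact (sm_cont (dp BB) x t (sm_dp _ s_B)).
      - exact (exR (fun p t => 4 * FE p t) (sm_mult _ _ (sm_const 4) s_FE) t _ _).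
      - exact (exR (dp BB) (sm_dp _ s_B) t _ _). }
    rewrite per_B in Hsplit. lra.
Qed.

Lemma Et_nonneg t : 0 <= Et t.
Proof.
  apply RInt_ge_0; [lra | exact (exR FE s_FE t _ _) |].
  intros x _. unfold FE. apply Rmult_le_pos; [apply pow2_ge_0 | left; apply gpos].
Qed.

Lemma Lt_nonneg t : 0 <= Lt t.
Proof.
  apply RInt_ge_0; [lra | exact (exR (cag X Y) s_g t _ _) |].
  intros x _. left; apply gpos.
Qed.

Lemma main_pos : is_lim (caE X Y) m_infty 0.
Proof.
  apply (is_lim_ext Et). { intros t. symmetry. apply Et_caE. }
  apply (final_lim Et Lt Lt_der Lt_nonneg Et_der Et_nonneg).
Qed.

End Main.

Lemma GG_nz X Y (nd : nondegenerate X Y) p t : GG X Y p t <> 0.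
Proof.
  unfold GG. apply Rmult_integral_contrapositive_currified.
  - exact (knz X Y nd p t).
  - apply Rinv_neq_0_compat. exact (hnz X Y nd p t).
Qed.

Lemma sign_const X Y (sX : smooth2 X) (sY : smooth2 Y) (nd : nondegenerate X Y) p1 t1 p t :
  GG X Y p1 t1 < 0 -> GG X Y p t <= 0.
Proof.
  intros H1. apply Rnot_lt_le. intros H2.
  set (f := fun s => GG X Y (p1 + s * (p - p1)) (t1 + s * (t - t1))).
  assert (Hc : continuity f).
  { intros s. apply continuity_pt_filterlim.
    apply (continuous_comp_2 (fun s => p1 + s * (p - p1)) (fun s => t1 + s * (t - t1)) (GG X Y)).
    - apply (ex_derive_continuous (fun s => p1 + s * (p - p1))). auto_derive. auto.
    - apply (ex_derive_continuous (fun s => t1 + s * (t - t1))). auto_derive. auto.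
    - apply cont_iff. apply (sm_C2d _ (s_G X Y sX sY nd)). }
  assert (F0 : f 0 < 0) by (unfold f; replace (p1 + 0 * (p - p1)) with p1 by ring;
     replace (t1 + 0 * (t - t1)) with t1 by ring; exact H1).
  assert (F1 : 0 < f 1) by (unfold f; replace (p1 + 1 * (p - p1)) with p by ring;
     replace (t1 + 1 * (t - t1)) with t by ring; exact H2).
  destruct (IVT f 0 1 Hc Rlt_0_1 F0 F1) as [z [_ Hz]].
  apply (GG_nz X Y nd _ _ Hz).
Qed.

Theorem proposition6p6 (lam p0 : R) (X Y : R -> R -> R) :
  smooth2 X -> smooth2 Y ->
  closed_embedded X Y ->
  convex_curves X Y ->
  nondegenerate X Y ->
  ca_flow lam p0 X Y ->
  (exists M : R, forall p t, Rabs (caphi X Y p t) <= M) ->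
  is_lim (caE X Y) m_infty 0.
Proof.
  intros sX sY [Hper _] _ nd fl _.
  assert (perX : per X) by (intros p t; exact (proj1 (Hper p t))).
  assert (perY : per Y) by (intros p t; exact (proj2 (Hper p t))).
  destruct (classic (forall p t, 0 < GG X Y p t)) as [Hpos | Hneg].
  - exact (main_pos lam p0 X Y sX sY nd Hpos fl perX perY).
  - apply not_all_ex_not in Hneg. destruct Hneg as [p1 Hp1].
    apply not_all_ex_not in Hp1. destruct Hp1 as [t1 Ht1].
    assert (H1 : GG X Y p1 t1 < 0).
    { apply Rnot_lt_le in Ht1. destruct (Rle_lt_or_eq_dec _ _ Ht1) as [H|H]; auto.
      exfalso. exact (GG_nz X Y nd _ _ H). }
    apply (is_lim_ext (fun _ => 0)).
    + intros t. unfold caE. symmetry.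
      rewrite (RInt_ext _ (fun _ => 0)).
      * rewrite RInt_const. exact (scal_zero_r (1 - 0)).
      * intros x _. rewrite g_def, (sqrt_neg_0 _ (sign_const X Y sX sY nd p1 t1 x t H1)). apply Rmult_0_r.
    + apply is_lim_const.
Qed.
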